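(* Fix $u$ and values $B_u>0$, $R_u^S>0$, $F_u>0$, and write $c_u=B_u r_u$. Define $\eta_u^{\mathrm{opt}}\in[0,1]$, $T_u^{\eta\text{-opt}}$ and $V_u^{\eta\text{-opt}}$ by the following six exhaustive cases: 1. If $c_u<R_u^S$: $\eta_u^{\mathrm{opt}}=0$, $T_u^{\eta\text{-opt}}=\frac{D_u}{c_u}$, $V_u^{\eta\text{-opt}}=0$. 2. If $R_u^S\le c_u<\frac{R_u^S}{\zeta_u}$ and $\frac{F_u}{\rho_u}<\frac{c_u-R_u^S}{1-\zeta_u}$: $\eta_u^{\mathrm{opt}}=\frac{F_u}{F_u(1-\zeta_u)+\rho_uR_u^S}$, $T_u^{\eta\text{-opt}}=\frac{D_u\rho_u}{F_u(1-\zeta_u)+\rho_uR_u^S}$, $V_u^{\eta\text{-opt}}=\frac{D_u}{c_u}\left[c_u-R_u^S-(1-\zeta_u)\frac{F_u}{\rho_u}\right]$. 3. If $R_u^S\le c_u<\frac{R_u^S}{\zeta_u}$ and $\frac{F_u}{\rho_u}\ge\frac{c_u-R_u^S}{1-\zeta_u}$: $\eta_u^{\mathrm{opt}}=\frac{c_u-R_u^S}{(1-\zeta_u)c_u}$, $T_u^{\eta\text{-opt}}=\frac{D_u}{c_u}$, $V_u^{\eta\text{-opt}}=0$. 4. If $c_u\ge\frac{R_u^S}{\zeta_u}$ and $\frac{F_u}{\rho_u}<\frac{R_u^S}{\zeta_u}$: $\eta_u^{\mathrm{opt}}=\frac{F_u}{F_u(1-\zeta_u)+\rho_uR_u^S}$,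 $T_u^{\eta\text{-opt}}=\frac{D_u\rho_u}{F_u(1-\zeta_u)+\rho_uR_u^S}$, $V_u^{\eta\text{-opt}}=\frac{D_u}{c_u}\left[c_u-R_u^S-(1-\zeta_u)\frac{F_u}{\rho_u}\right]$. 5. If $c_u\ge\frac{R_u^S}{\zeta_u}$ and $\frac{R_u^S}{\zeta_u}\le\frac{F_u}{\rho_u}<c_u$: $\eta_u^{\mathrm{opt}}=1$, $T_u^{\eta\text{-opt}}=\frac{\zeta_uD_u}{R_u^S}$, $V_u^{\eta\text{-opt}}=\frac{D_u}{c_u}\left[c_u-R_u^S-(1-\zeta_u)\frac{F_u}{\rho_u}\right]$. 6. If $c_u\ge\frac{R_u^S}{\zeta_u}$ and $\frac{F_u}{\rho_u}\ge c_u$: $\eta_u^{\mathrm{opt}}=1$, $T_u^{\eta\text{-opt}}=\frac{\zeta_uD_u}{R_u^S}$, $V_u^{\eta\text{-opt}}=\frac{D_u}{c_u}(\zeta_uc_u-R_u^S)$. Then $T_u(B_u,R_u^S,F_u,\eta_u^{\mathrm{opt}})=T_u^{\eta\text{-opt}}$, $V_u(B_u,R_u^S,F_u,\eta_u^{\mathrm{opt}})=V_u^{\eta\text{-opt}}$, and for every $\eta_u\in[0,1]$, $T_u(B_u,R_u^S,F_u,\eta_u^{\mathrm{opt}})\le T_u(B_u,R_u^S,F_u,\eta_u)$ and $V_u(B_u,R_u^S,F_u,\eta_u^{\mathrm{opt}})\le V_u(B_u,R_u^S,F_u,\eta_u)$.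
   Context: There are users $u=1,\dots,U$, each with constants $D_u>0$ (data size), $r_u>0$ (spectral efficiency), $\rho_u>0$ (computing intensity) and $\zeta_u\in(0,1)$ (computing output-to-input ratio). For $B_u>0$, $R_u^S>0$, $F_u>0$, $\eta_u\in[0,1]$, write $c_u=B_ur_u$ and define $T_u(B_u,R_u^S,F_u,\eta_u)$ and $V_u(B_u,R_u^S,F_u,\eta_u)$ piecewise: (a) if $\eta_uc_u\ge F_u/\rho_u$, $\zeta_uF_u/\rho_u+(1-\eta_u)c_u\ge R_u^S$, $F_u/\rho_u\ge\frac{\eta_uR_u^S}{\zeta_u\eta_u+1-\eta_u}$: $T_u=\frac{D_u}{R_u^S}(\zeta_u\eta_u+1-\eta_u)$, $V_u=\frac{D_u}{c_u}[c_u-R_u^S-(1-\zeta_u)\frac{F_u}{\rho_u}]$; (b) if $\eta_uc_u\ge F_u/\rho_u$, $\zeta_uF_u/\rho_u+(1-\eta_u)c_u\ge R_u^S$, $F_u/\rho_u<\frac{\eta_uR_u^S}{\zeta_u\eta_u+1-\eta_u}$: $T_u=\frac{\eta_uD_u\rho_u}{F_u}$, $V_u=\frac{D_u}{c_u}[c_u-R_u^S-(1-\zeta_u)\frac{F_u}{\rho_u}]$; (c) if $\eta_uc_u\ge F_u/\rho_u$, $\zeta_uF_u/\rho_u+(1-\eta_u)c_u< R_u^S$: $T_u=\frac{\eta_uD_u\rho_u}{F_u}$, $V_u=\frac{D_u}{c_u}(\eta_uc_u-\frac{F_u}{\rho_u})$; (d) if $\eta_uc_u< F_u/\rho_u$,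 $(\zeta_u\eta_u+1-\eta_u)c_u\ge R_u^S$: $T_u=\frac{D_u}{R_u^S}(\zeta_u\eta_u+1-\eta_u)$, $V_u=\frac{D_u}{c_u}[(\zeta_u\eta_u+1-\eta_u)c_u-R_u^S]$; (e) if $\eta_uc_u< F_u/\rho_u$, $(\zeta_u\eta_u+1-\eta_u)c_u< R_u^S$: $T_u=\frac{D_u}{c_u}$, $V_u=0$. *)

(* Defs.v *)
From mathcomp Require Import all_boot all_order all_algebra.
Set Implicit Arguments. Unset Strict Implicit. Unset Printing Implicit Defensive.
Import Order.TTheory GRing.Theory Num.Theory.
Local Open Scope ring_scope.

Section Model.
Variable R : realFieldType.
(* per-user constants: D (data size), r (spectral efficiency),
   rho (computing intensity), zeta (output/input ratio) *)
Variables (D r rho zeta : R).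

Definition cap (B : R) : R := B * r.

Definition Tu (B RS F eta : R) : R :=
  let c := cap B in
  if F / rho <= eta * c then
    if RS <= zeta * (F / rho) + (1 - eta) * c then
      if eta * RS / (zeta * eta + 1 - eta) <= F / rho
      then D / RS * (zeta * eta + 1 - eta)
      else eta * D * rho / F
    else eta * D * rho / F
  else
    if RS <= (zeta * eta + 1 - eta) * c
    then D / RS * (zeta * eta + 1 - eta)
    else D / c.

Definition Vu (B RS F eta : R) : R :=
  let c := cap B in
  if F / rho <= eta * c then
    if RS <= zeta * (F / rho) + (1 - eta) * c then
      D / c * (c - RS - (1 - zeta) * (F / rho))
    else D / c * (eta * c - F / rho)
  else
    if RS <= (zeta * eta + 1 - eta) * c
    then D / c * ((zeta * eta + 1 - eta) * c - RS)
    else 0.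

Definition eta_opt (B RS F : R) : R :=
  let c := cap B in
  if c < RS then 0
  else if c < RS / zeta then
    if F / rho < (c - RS) / (1 - zeta)
    then F / (F * (1 - zeta) + rho * RS)
    else (c - RS) / ((1 - zeta) * c)
  else if F / rho < RS / zeta
    then F / (F * (1 - zeta) + rho * RS)
  else 1.

Definition T_opt (B RS F : R) : R :=
  let c := cap B in
  if c < RS then D / c
  else if c < RS / zeta then
    if F / rho < (c - RS) / (1 - zeta)
    then D * rho / (F * (1 - zeta) + rho * RS)
    else D / c
  else if F / rho < RS / zeta
    then D * rho / (F * (1 - zeta) + rho * RS)
  else zeta * D / RS.

Definition V_opt (B RS F : R) : R :=
  let c := cap B in
  if c < RS then 0
  else if c < RS / zeta then
    if F / rho < (c - RS) / (1 - zeta)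
    then D / c * (c - RS - (1 - zeta) * (F / rho))
    else 0
  else if F / rho < RS / zeta
    then D / c * (c - RS - (1 - zeta) * (F / rho))
  else if F / rho < c
    then D / c * (c - RS - (1 - zeta) * (F / rho))
  else D / c * (zeta * c - RS).
End Model.

(* Main.v *)
Require Import Defs.
From mathcomp Require Import all_boot all_order all_algebra.
From mathcomp Require Import ring lra.
Import Order.TTheory GRing.Theory Num.Theory.
Set Implicit Arguments. Unset Strict Implicit.
Local Open Scope ring_scope.

Section S.
Context (R : realFieldType).
Lemma le_by (x y w : R) : y - x = w -> 0 <= w -> x <= y.
Proof. by move=> h hw; rewrite -subr_ge0 h. Qed.

Definition T' (D z RS c f eta : R) :=
  if f <= eta * c then
    if RS <= z * f + (1 - eta) * c then
      if eta * RS / (z * eta + 1 - eta) <= f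
      then D / RS * (z * eta + 1 - eta)
      else eta * D / f
    else eta * D / f
  else
    if RS <= (z * eta + 1 - eta) * c
    then D / RS * (z * eta + 1 - eta)
    else D / c.

Lemma lowT (D z RS c f eta : R) : 0 < D -> 0 < z -> z < 1 -> 0 < RS -> 0 < c -> 0 < f ->
  0 <= eta -> eta <= 1 ->
  [/\ D / c <= T' D z RS c f eta, z * D / RS <= T' D z RS c f eta &
      D / (f * (1 - z) + RS) <= T' D z RS c f eta].
Proof.
move=> hD hz0 hz1 hRS hc hf he0 he1.
have hg : 0 < z * eta + 1 - eta by nra.
have hS : 0 < f * (1 - z) + RS by nra.
have hz : 0 < 1 - z by lra.
rewrite /T'; case: ifP => [H1|/negbT]; last rewrite -ltNge => H1.
- case: ifP => [H2|/negbT]; last rewrite -ltNge => H2.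
  + case: ifP => [H3|/negbT]; last rewrite -ltNge => H3.
    * rewrite ler_pdivrMr // in H3.
      split.
      - apply: (@le_by _ _ (D * ((z*eta+1-eta)*c - RS) / (RS * c))).
          by field; rewrite ?gt_eqF.
        apply: divr_ge0; last by nra. apply: mulr_ge0; nra.
      - apply: (@le_by _ _ (D * ((1-z)*(1-eta)) / RS)).
          by field; rewrite ?gt_eqF.
        apply: divr_ge0; last by nra. apply: mulr_ge0; nra.
      - apply: (@le_by _ _ (D * ((1-z)*((z*eta+1-eta)*f - eta*RS)) / (RS * (f*(1-z)+RS)))).
          by field; rewrite ?gt_eqF.
        apply: divr_ge0; last by nra. apply: mulr_ge0; nra.
    * rewrite ltr_pdivlMr // in H3.
      split.
      - apply: (@le_by _ _ (D * (eta*c - f) / (f * c))).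
          by field; rewrite ?gt_eqF.
        apply: divr_ge0; last by nra. apply: mulr_ge0; nra.
      - apply: (@le_by _ _ (D * (eta*RS - z*f) / (f * RS))).
          by field; rewrite ?gt_eqF.
        apply: divr_ge0; last by nra. apply: mulr_ge0; first lra. have P4 : 0 <= (1-z)*((1-eta)*f) by apply: mulr_ge0; nra. nra.
      - apply: (@le_by _ _ (D * (eta*(f*(1-z)+RS) - f) / (f * (f*(1-z)+RS)))).
          by field; rewrite ?gt_eqF.
        apply: divr_ge0; last by nra. apply: mulr_ge0; nra.
  + have P1 : 0 <= eta * (RS - z*f - (1-eta)*c) by apply: mulr_ge0; lra.
    have P2 : 0 <= (1-eta) * (eta*c - f) by apply: mulr_ge0; lra.
    have P3 : 0 <= (1-eta) * ((1-z)*f) by apply: mulr_ge0; nra.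
    split.
      - apply: (@le_by _ _ (D * (eta*c - f) / (f * c))).
          by field; rewrite ?gt_eqF.
        apply: divr_ge0; last by nra. apply: mulr_ge0; nra.
      - apply: (@le_by _ _ (D * (eta*RS - z*f) / (f * RS))).
          by field; rewrite ?gt_eqF.
        apply: divr_ge0; last by nra. apply: mulr_ge0; nra.
      - apply: (@le_by _ _ (D * (eta*(f*(1-z)+RS) - f) / (f * (f*(1-z)+RS)))).
          by field; rewrite ?gt_eqF.
        apply: divr_ge0; last by nra. apply: mulr_ge0; nra.
- case: ifP => [H2|/negbT]; last rewrite -ltNge => H2.
  + have P1 : 0 <= (z*eta+1-eta) * (f - eta*c) by apply: mulr_ge0; lra.
    have P2 : 0 <= eta * ((z*eta+1-eta)*c - RS) by apply: mulr_ge0; lra.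
    split.
      - apply: (@le_by _ _ (D * ((z*eta+1-eta)*c - RS) / (RS * c))).
          by field; rewrite ?gt_eqF.
        apply: divr_ge0; last by nra. apply: mulr_ge0; nra.
      - apply: (@le_by _ _ (D * ((1-z)*(1-eta)) / RS)).
          by field; rewrite ?gt_eqF.
        apply: divr_ge0; last by nra. apply: mulr_ge0; nra.
      - apply: (@le_by _ _ (D * ((1-z)*((z*eta+1-eta)*f - eta*RS)) / (RS * (f*(1-z)+RS)))).
          by field; rewrite ?gt_eqF.
        apply: divr_ge0; last by nra. apply: mulr_ge0; nra.
  + have P1 : 0 <= (1-z)*(1-eta)*c by apply: mulr_ge0; nra.
    have P2 : 0 <= (1-z)*(f - eta*c) by apply: mulr_ge0; lra.
    split; first by [].
      - apply: (@le_by _ _ (D * (RS - z*c) / (c * RS))).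
          by field; rewrite ?gt_eqF.
        apply: divr_ge0; last by nra. apply: mulr_ge0; nra.
      - apply: (@le_by _ _ (D * (f*(1-z)+RS - c) / (c * (f*(1-z)+RS)))).
          by field; rewrite ?gt_eqF.
        apply: divr_ge0; last by nra. apply: mulr_ge0; nra.
Qed.

Definition V' (D z RS c f eta : R) :=
  if f <= eta * c then
    if RS <= z * f + (1 - eta) * c then
      D / c * (c - RS - (1 - z) * f)
    else D / c * (eta * c - f)
  else
    if RS <= (z * eta + 1 - eta) * c
    then D / c * ((z * eta + 1 - eta) * c - RS)
    else 0.

Lemma lowV (D z RS c f eta : R) : 0 < D -> 0 < z -> z < 1 -> 0 < RS -> 0 < c -> 0 < f ->
  0 <= eta -> eta <= 1 ->
  [/\ D / c * 0 <= V' D z RS c f eta, D / c * (c - RS - (1 - z) * f) <= V' D z RS c f eta &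
      D / c * (z * c - RS) <= V' D z RS c f eta].
Proof.
move=> hD hz0 hz1 hRS hc hf he0 he1.
have hDc : 0 <= D / c by apply: divr_ge0; lra.
have hz : 0 < 1 - z by lra.
rewrite /V'; case: ifP => [H1|/negbT]; last rewrite -ltNge => H1.
- have P0 : 0 <= (1-eta)*c by apply: mulr_ge0; lra.
  case: ifP => [H2|/negbT]; last rewrite -ltNge => H2.
  + have P1 : 0 <= (1-z)*(c - f) by apply: mulr_ge0; lra.
    split; apply: ler_wpM2l => //; lra.
  + have P1 : 0 <= (1-z)*(c - f) by apply: mulr_ge0; lra.
    split; apply: ler_wpM2l => //; lra.
- case: ifP => [H2|/negbT]; last rewrite -ltNge => H2.
  + have P1 : 0 <= (1-z)*(f - eta*c) by apply: mulr_ge0; lra.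
    have P2 : 0 <= (1-z)*((1-eta)*c) by apply: mulr_ge0; nra.
    split; apply: ler_wpM2l => //; lra.
  + have P1 : 0 <= (1-z)*(f - eta*c) by apply: mulr_ge0; lra.
    have P2 : 0 <= (1-z)*((1-eta)*c) by apply: mulr_ge0; nra.
    rewrite -(mulr0 (D/c)).
    split; apply: ler_wpM2l => //; lra.
Qed.

Definition e' (z RS c f : R) :=
  if c < RS then 0
  else if c < RS / z then
    if f < (c - RS) / (1 - z) then f / (f * (1 - z) + RS)
    else (c - RS) / ((1 - z) * c)
  else if f < RS / z then f / (f * (1 - z) + RS)
  else 1.
Definition Topt' (D z RS c f : R) :=
  if c < RS then D / c
  else if c < RS / z then
    if f < (c - RS) / (1 - z) then D / (f * (1 - z) + RS)
    else D / c
  else if f < RS / z then D / (f * (1 - z) + RS)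
  else z * D / RS.
Definition Vopt' (D z RS c f : R) :=
  if c < RS then D / c * 0
  else if c < RS / z then
    if f < (c - RS) / (1 - z) then D / c * (c - RS - (1 - z) * f)
    else D / c * 0
  else if f < RS / z then D / c * (c - RS - (1 - z) * f)
  else if f < c then D / c * (c - RS - (1 - z) * f)
  else D / c * (z * c - RS).

Lemma case24 (D z RS c f : R) : 0 < D -> 0 < z -> z < 1 -> 0 < RS -> 0 < c -> 0 < f ->
  f * (1 - z) + RS < c -> z * f < RS ->
  let e := f / (f * (1 - z) + RS) in
  [/\ 0 <= e <= 1, T' D z RS c f e = D / (f * (1 - z) + RS) &
      V' D z RS c f e = D / c * (c - RS - (1 - z) * f)].
Proof.
move=> hD hz0 hz1 hRS hc hf hSc hzf e.
have hS : 0 < f * (1 - z) + RS by nra.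
have eS : e * (f * (1 - z) + RS) = f by rewrite /e; field; rewrite gt_eqF.
have e0 : 0 < e by apply: divr_gt0.
have e1 : e < 1 by rewrite /e ltr_pdivrMr // mul1r; lra.
have hg : z * e + 1 - e = RS / (f * (1 - z) + RS) by rewrite /e; field; rewrite gt_eqF.
have C1 : f <= e * c.
  have : 0 <= e * (c - (f*(1-z)+RS)) by apply: mulr_ge0; lra.
  nra.
have C2 : RS <= z * f + (1 - e) * c.
  have : 0 <= (1-e) * (c - (f*(1-z)+RS)) by apply: mulr_ge0; lra.
  nra.
have C3 : e * RS / (z * e + 1 - e) = f.
  by rewrite hg /e; field; rewrite !gt_eqF.
split; first by apply/andP; split; apply: ltW.
  by rewrite /T' C1 C2 C3 lexx hg; field; rewrite !gt_eqF.
by rewrite /V' C1 C2.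
Qed.

Lemma eqs (D z RS c f : R) : 0 < D -> 0 < z -> z < 1 -> 0 < RS -> 0 < c -> 0 < f ->
  let e := e' z RS c f in
  [/\ 0 <= e <= 1, T' D z RS c f e = Topt' D z RS c f &
      V' D z RS c f e = Vopt' D z RS c f].
Proof.
move=> hD hz0 hz1 hRS hc hf.
have hz : 0 < 1 - z by lra.
rewrite /e' /Topt' /Vopt'.
case: (ltP c RS) => h1.
  have C1 : (f <= 0 * c) = false by rewrite mul0r lt_geF.
  have C2 : (RS <= (z * 0 + 1 - 0) * c) = false by rewrite lt_geF //; lra.
  split; [by rewrite lexx ler01 | by rewrite /T' C1 C2 | by rewrite /V' C1 C2 mulr0].
case: (ltP c (RS / z)) => h2.
  have h2' : z * c < RS by rewrite mulrC -ltr_pdivlMr.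
  case: (ltP f ((c - RS) / (1 - z))) => h3.
    have h3' : f * (1 - z) + RS < c by rewrite ltr_pdivlMr in h3 => //; lra.
    apply: case24 => //.
    have : 0 < (1 - z) * (RS - z * f) by apply: mulr_gt0 => //; nra.
    nra.
  have h3' : c - RS <= f * (1 - z) by rewrite -ler_pdivrMr.
  set e := (c - RS) / ((1 - z) * c).
  have e0 : 0 <= e by apply: divr_ge0; nra.
  have e1 : e <= 1 by rewrite /e ler_pdivrMr ?mul1r; nra.
  have ec : e * c = (c - RS) / (1 - z) by rewrite /e; field; rewrite !gt_eqF.
  have hg : z * e + 1 - e = RS / c by rewrite /e; field; rewrite !gt_eqF.
  split; first by apply/andP.
  + rewrite /T' hg.
    have [Ce|Cne] := eqVneq f (e * c).
      have C1 : f <= e * c by rewrite Ce.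
      have E2 : z * f + (1 - e) * c = RS by rewrite Ce /e; field; rewrite !gt_eqF.
      have E3 : e * RS / (RS / c) = e * c by field; rewrite !gt_eqF.
      by rewrite C1 E2 lexx E3 -Ce lexx; field; rewrite !gt_eqF.
    have C1 : (f <= e * c) = false.
      by apply: lt_geF; rewrite lt_neqAle eq_sym Cne ec ler_pdivrMr.
    have E2 : RS / c * c = RS by field; rewrite !gt_eqF.
    by rewrite C1 E2 lexx; field; rewrite !gt_eqF.
  + rewrite /V' hg.
    have [Ce|Cne] := eqVneq f (e * c).
      have C1 : f <= e * c by rewrite Ce.
      have E2 : z * f + (1 - e) * c = RS by rewrite Ce /e; field; rewrite !gt_eqF.
      by rewrite C1 E2 lexx; congr (_ * _); rewrite Ce ec; field; rewrite !gt_eqF.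
    have C1 : (f <= e * c) = false.
      by apply: lt_geF; rewrite lt_neqAle eq_sym Cne ec ler_pdivrMr.
    have E2 : RS / c * c = RS by field; rewrite !gt_eqF.
    by rewrite C1 E2 lexx subrr.
have h2' : RS <= z * c by rewrite mulrC -ler_pdivrMr.
case: (ltP f (RS / z)) => h3.
  have h3' : z * f < RS by rewrite mulrC -ltr_pdivlMr.
  apply: case24 => //.
  have : 0 < (1 - z) * (RS - z * f) by apply: mulr_gt0 => //; nra.
  have : 0 < z * (c * (1 - z)) by apply: mulr_gt0 => //; nra.
  nra.
have h3' : RS <= z * f by rewrite mulrC -ler_pdivrMr.
have C3 : 1 * RS / (z * 1 + 1 - 1) <= f by rewrite mul1r mulr1 addrK ler_pdivrMr // mulrC.
have hg : z * 1 + 1 - 1 = z by rewrite mulr1 addrK.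
split; first by rewrite ler01 lexx.
+ rewrite /T' C3 hg subrr mul0r addr0 !mul1r.
  case: ifP => C1; first by rewrite h3' mulrC mulrA.
  by rewrite h2' mulrC mulrA.
+ rewrite /V' hg subrr mul0r addr0 !mul1r.
  case: (ltP f c) => h4.
    by rewrite (ltW h4) h3'.
  have [Ce|Cne] := eqVneq f c.
    rewrite Ce lexx -Ce h3'; congr (_ * _); rewrite Ce; ring.
  have C1 : (f <= c) = false by apply: lt_geF; rewrite lt_neqAle eq_sym Cne h4.
  by rewrite C1 h2'.
Qed.
End S.

Theorem theorem1 (R : realFieldType) (D r rho zeta B RS F : R)
  (hD : 0 < D) (hr : 0 < r) (hrho : 0 < rho) (hz0 : 0 < zeta) (hz1 : zeta < 1)
  (hB : 0 < B) (hRS : 0 < RS) (hF : 0 < F) :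
  let e := eta_opt r rho zeta B RS F in
  [/\ 0 <= e <= 1,
      Tu D r rho zeta B RS F e = T_opt D r rho zeta B RS F,
      Vu D r rho zeta B RS F e = V_opt D r rho zeta B RS F &
      forall eta : R, 0 <= eta <= 1 ->
        Tu D r rho zeta B RS F e <= Tu D r rho zeta B RS F eta /\
        Vu D r rho zeta B RS F e <= Vu D r rho zeta B RS F eta].
Proof.
have hc : 0 < B * r by apply: mulr_gt0.
have hf : 0 < F / rho by apply: divr_gt0.
have TuE : forall eta, Tu D r rho zeta B RS F eta = T' D zeta RS (B*r) (F/rho) eta.
  move=> eta; rewrite /Tu /T' /cap.
  have -> : eta * D * rho / F = eta * D / (F / rho) by field; rewrite !gt_eqF.
  by [].
have VuE : forall eta, Vu D r rho zeta B RS F eta = V' D zeta RS (B*r) (F/rho) eta by [].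
have hS : 0 < F * (1 - zeta) + rho * RS.
  have : 0 < F * (1 - zeta) by apply: mulr_gt0 => //; lra.
  have : 0 < rho * RS by apply: mulr_gt0.
  lra.
have hS' : 0 < F * (1 - zeta) + RS * rho by rewrite (mulrC RS).
have eE : eta_opt r rho zeta B RS F = e' zeta RS (B*r) (F/rho).
  rewrite /eta_opt /e' /cap.
  have -> : F / (F * (1 - zeta) + rho * RS) = F / rho / (F / rho * (1 - zeta) + RS).
    by field; rewrite !gt_eqF.
  by [].
have TE : T_opt D r rho zeta B RS F = Topt' D zeta RS (B*r) (F/rho).
  rewrite /T_opt /Topt' /cap.
  have -> : D * rho / (F * (1 - zeta) + rho * RS) = D / (F / rho * (1 - zeta) + RS).
    by field; rewrite !gt_eqF.
  by [].
have VE : V_opt D r rho zeta B RS F = Vopt' D zeta RS (B*r) (F/rho).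
  by rewrite /V_opt /Vopt' /cap !mulr0.
move=> e; rewrite /e eE TE VE !TuE !VuE.
have [H1 H2 H3] := eqs hD hz0 hz1 hRS hc hf.
split => // eta /andP[he0 he1].
have [T1 T2 T3] := lowT hD hz0 hz1 hRS hc hf he0 he1.
have [V1 V2 V3] := lowV hD hz0 hz1 hRS hc hf he0 he1.
rewrite !TuE !VuE H2 H3 /Topt' /Vopt'.
split.
  by repeat case: ifP => _.
by repeat case: ifP => _.
Qed.
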